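(* Let $f:\mathbb{R}^N\times(0,T]\to\mathbb{R}^N$ be monotone in the sense that $(f(u,t)-f(v,t),u-v)\le 0$ for all $u,v\in\mathbb{R}^N$ and all $t$. Let $U$ and $V$ be the $\mathrm{mdG}(q)$ solutions of $\dot w=f(w,t)$ on $(0,T]$ with initial data $U(0^-)$ and $V(0^-)$ respectively, computed on the same partitions and with the same local degrees. Then at every synchronized time-level $\bar t$ (for instance $\bar t=T$), $$\|U(\bar t^-)-V(\bar t^-)\|\le \|U(0^-)-V(0^-)\|,$$ where $\|\cdot\|$ is the Euclidean norm and $(\cdot,\cdot)$ the Euclidean inner product.
   Context: Multi-adaptive discontinuous Galerkin method $\mathrm{mdG}(q)$ for $\dot w=f(w,t)$ on $(0,T]$ with $w(0^-)$ given: for each component $i=1,\dots,N$ one chooses a partition $0=t_{i0}<\dots<t_{iM_i}=T$, intervals $I_{ij}=(t_{i,j-1},t_{ij}]$ and degrees $q_{ij}\ge0$. The solution $W$ has $W_i|_{I_{ij}}\in\mathcal{P}^{q_{ij}}(I_{ij})$ (polynomials of degree $\le q_{ij}$; no continuity required across nodes), $W_i(0^-)$ given, and for all $i,j$ $$[W_i]_{i,j-1}\,v(t_{i,j-1}^+)+\int_{I_{ij}}\dot W_i\,v\,dt=\int_{I_{ij}}f_i(W(t),t)\,v\,dt\qquad\forall v\in\mathcal{P}^{q_{ij}}(I_{ij}),$$ where $[W_i]_{ij}=W_i(t_{ij}^+)-W_i(t_{ij}^-)$ and integrals are exact. A synchronized time-level is a time $\bar t\in(0,T]$ that is a partition node $t_{ij}$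 for every component $i$. *)

(* Defs.v *)
From HB Require Import structures.
From mathcomp Require Import all_boot all_order all_algebra.
From mathcomp Require Import all_classical all_reals all_analysis.
Set Implicit Arguments. Unset Strict Implicit. Unset Printing Implicit Defensive.
Import Order.TTheory GRing.Theory Num.Theory.
Local Open Scope classical_set_scope.
Local Open Scope ring_scope.

Definition vdot {R : realType} {N : nat} (x y : 'I_N -> R) : R :=
  \sum_(i < N) x i * y i.
Definition vnorm {R : realType} {N : nat} (x : 'I_N -> R) : R :=
  Num.sqrt (vdot x x).
Definition vsub {R : realType} {N : nat} (x y : 'I_N -> R) : 'I_N -> R :=
  fun i => x i - y i.

Definition monotone_rhs {R : realType} {N : nat} (T : R)
  (f : ('I_N -> R) -> R -> ('I_N -> R)) : Prop :=
  forall (u v : 'I_N -> R) (t : R), 0 < t <= T ->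
    vdot (vsub (f u t) (f v t)) (vsub u v) <= 0.

Definition valid_partitions {R : realType} {N : nat} (T : R)
  (M : 'I_N -> nat) (tp : 'I_N -> nat -> R) : Prop :=
  forall i : 'I_N, tp i 0%N = 0 /\ tp i (M i) = T /\
    (forall j : nat, (j < M i)%N -> tp i j < tp i j.+1).

Definition intI {R : realType} (a b : R) (g : R -> R) : R :=
  Rintegral (@lebesgue_measure R) `]a, b] g.

(* W : 'I_N -> R -> R gives the values W_i(t) for t in (0,T]; W0 = W(0^-).
   W is an mdG(q) solution: on each I_ij = (t_{i,j-1}, t_ij], W_i coincides with
   a polynomial P of degree <= q_ij, the integrand f_i(W(t),t) is integrable on
   I_ij (the exact integrals exist), and the Galerkin equations hold for all test
   polynomials v of degree <= q_ij.  W_i(t_{i,j-1}^+) = P(t_{i,j-1}) and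
   W_i(t_{i,j-1}^-) = W_i(t_{i,j-1}) (resp. W0 i when j = 1). *)
Definition mdG_solution {R : realType} {N : nat}
  (M : 'I_N -> nat) (tp : 'I_N -> nat -> R) (q : 'I_N -> nat -> nat)
  (f : ('I_N -> R) -> R -> ('I_N -> R))
  (W0 : 'I_N -> R) (W : 'I_N -> R -> R) : Prop :=
  forall (i : 'I_N) (j : nat), (0 < j <= M i)%N ->
    exists P : {poly R},
      (size P <= (q i j).+1)%N /\
      (forall t, tp i j.-1 < t <= tp i j -> W i t = P.[t]) /\
      (@lebesgue_measure R).-integrable `]tp i j.-1, tp i j]
         (EFin \o (fun t => f (fun k => W k t) t i)) /\
      (forall v : {poly R}, (size v <= (q i j).+1)%N ->
         (P.[tp i j.-1] - (if j.-1 == 0%N then W0 i else W i (tp i j.-1)))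
             * v.[tp i j.-1]
         + intI (tp i j.-1) (tp i j) (fun t => (P^`()).[t] * v.[t])
         = intI (tp i j.-1) (tp i j) (fun t => f (fun k => W k t) t i * v.[t])).

Definition synchronized {R : realType} {N : nat} (T : R)
  (M : 'I_N -> nat) (tp : 'I_N -> nat -> R) (tbar : R) : Prop :=
  0 < tbar <= T /\ forall i : 'I_N, exists j : nat, (j <= M i)%N /\ tp i j = tbar.

(* Main.v *)
Require Import Defs.
From HB Require Import structures.
From mathcomp Require Import all_boot all_order all_algebra.
From mathcomp Require Import all_classical all_reals all_analysis.
From mathcomp Require Import ring lra measurable_realfun.
Import Order.TTheory GRing.Theory Num.Theory.
Local Open Scope classical_set_scope.
Local Open Scope ring_scope.

Set Implicit Arguments. Unset Strict Implicit.
Section S.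
Variable R : realType.
Notation mu := (@lebesgue_measure R).

Lemma poly_int (p : {poly R}) (a b : R) :
  mu.-integrable `]a, b] (EFin \o horner p).
Proof.
apply: (@integrableS _ _ _ mu `[a, b]) => //.
  exact: subset_itv_oc_cc.
apply: continuous_compact_integrable; first exact: segment_compact.
apply: continuous_subspaceT => x; exact: continuous_horner.
Qed.

Lemma poly_dLR (p : {poly R}) (a b : R) : derivable_oo_LRcontinuous (horner p) a b.
Proof.
split.
- move=> x _; exact: derivable_horner.
- apply: cvg_at_right_filter; exact: continuous_horner.
- apply: cvg_at_left_filter; exact: continuous_horner.
Qed.

Lemma poly_ftc (D : {poly R}) (a b : R) : a < b ->
  intI a b (fun t => (D^`()).[t] * D.[t]) = (D.[b]^+2 - D.[a]^+2) / 2.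
Proof.
move=> ab.
have h := @Rintegration_by_parts R (horner D) (horner D) (horner D^`()) (horner D^`()) a b ab.
have c' := derivable_oo_LRcontinuous_within (poly_dLR D^`() a b).
have d' : {in `]a, b[, derive1 (horner D) =1 horner D^`()}.
  by move=> x _; rewrite derivE.
move: (h c' (poly_dLR D a b) d' c' (poly_dLR D a b) d') => {}h.
rewrite /intI Rintegral_itv_obnd_cbnd; last first.
  have -> : (fun t => (D^`()).[t] * D.[t]) = horner (D^`() * D).
    by apply/funext => t; rewrite hornerM.
  exact: poly_int.
have e : \int[mu]_(x in `[a, b]) (D.[x] * (D^`()).[x]) =
         \int[mu]_(x in `[a, b]) ((D^`()).[x] * D.[x]).
  by apply: eq_Rintegral => x _; rewrite mulrC.
rewrite e in h.
set I := Rintegral _ _ _ in h *.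
rewrite -!expr2 in h.
move: h; set x := D.[b] ^+ 2; set y := D.[a] ^+ 2; move=> h; lra.
Qed.


Lemma poly_bounded (p : {poly R}) (a b : R) :
  [bounded p.[x] | x in `]a, b]].
Proof.
have cp := continuous_compact (derivable_oo_LRcontinuous_within (poly_dLR p a b)) (@segment_compact R a b).
have := compact_bounded cp.
rewrite /bounded_near => /= H.
apply: filterS H => M HM x xab.
apply: HM; exists x => //.
exact: subset_itv_oc_cc.
Qed.

Lemma intMpoly (F : R -> R) (p : {poly R}) (a b : R) :
  mu.-integrable `]a, b] (EFin \o F) ->
  mu.-integrable `]a, b] (EFin \o (fun t => F t * p.[t])).
Proof.
move=> iF.
have := @integrableMl _ _ _ mu `]a, b] (measurable_itv _) _ (horner p) iF.
move=> H; apply: H; last exact: poly_bounded.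
apply: (measurable_funS (E:=setT)) => //.
exact: continuous_measurable_fun (@continuous_horner R p).
Qed.

Lemma step (a b : R) (ab : a < b) (n : nat) (P Q : {poly R}) (wU wV : R)
  (eU eV FU FV : R -> R) :
  (size P <= n)%N -> (size Q <= n)%N ->
  (forall t, a < t <= b -> eU t = P.[t]) ->
  (forall t, a < t <= b -> eV t = Q.[t]) ->
  mu.-integrable `]a, b] (EFin \o FU) -> mu.-integrable `]a, b] (EFin \o FV) ->
  (forall v : {poly R}, (size v <= n)%N ->
     (P.[a] - wU) * v.[a] + intI a b (fun t => (P^`()).[t] * v.[t])
     = intI a b (fun t => FU t * v.[t])) ->
  (forall v : {poly R}, (size v <= n)%N ->
     (Q.[a] - wV) * v.[a] + intI a b (fun t => (Q^`()).[t] * v.[t])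
     = intI a b (fun t => FV t * v.[t])) ->
  (eU b - eV b) ^+ 2 - (wU - wV) ^+ 2
    <= 2 * intI a b (fun t => (FU t - FV t) * (eU t - eV t)).
Proof.
move=> sP sQ HP HQ iU iV GU GV.
set D := P - Q.
have sD : (size D <= n)%N.
  rewrite /D (leq_trans (size_add _ _)) // size_opp geq_max sP sQ //.
have hU := GU D sD; have hV := GV D sD.
have e1 : intI a b (fun t => (P^`()).[t] * D.[t]) - intI a b (fun t => (Q^`()).[t] * D.[t])
   = intI a b (fun t => (D^`()).[t] * D.[t]).
  rewrite /intI -RintegralB //; last first.
  - have -> : (fun t => (Q^`()).[t] * D.[t]) = horner (Q^`() * D).
      by apply/funext => t; rewrite hornerM.
    exact: poly_int.
  - have -> : (fun t => (P^`()).[t] * D.[t]) = horner (P^`() * D).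
      by apply/funext => t; rewrite hornerM.
    exact: poly_int.
  apply: eq_Rintegral => t _.
  by rewrite /D derivB !hornerE mulrBl.
have e2 : intI a b (fun t => FU t * D.[t]) - intI a b (fun t => FV t * D.[t])
   = intI a b (fun t => (FU t - FV t) * (eU t - eV t)).
  rewrite /intI -RintegralB //; last 2 first.
  - exact: intMpoly.
  - exact: intMpoly.
  apply: eq_Rintegral => t /set_mem /=; rewrite in_itv /= => tab.
  by rewrite HP // HQ // /D !hornerE mulrBl.
have e3 := poly_ftc D ab.
have eb : D.[b] = eU b - eV b.
  by rewrite HP ?HQ ?lexx ?ab // /D !hornerE.
have ea : D.[a] = P.[a] - Q.[a] by rewrite /D !hornerE.
rewrite -eb -e2.
move: hU hV e1 e3 ea.
set IP := intI a b (fun t => (P^`()).[t] * D.[t]).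
set IQ := intI a b (fun t => (Q^`()).[t] * D.[t]).
set ID := intI a b (fun t => (D^`()).[t] * D.[t]).
set JU := intI a b (fun t => FU t * D.[t]).
set JV := intI a b (fun t => FV t * D.[t]).
set x := D.[a]; set y := D.[b]; set pa := P.[a]; set qa := Q.[a].
move=> hU hV e1 e3 ea.
rewrite -hU -hV.
have pae : pa = x + qa by rewrite ea; ring.
rewrite pae.
have := sqr_ge0 (x - (wU - wV)).
lra.
Qed.

Lemma integrableU_itv (a b c : R) (g : R -> R) : a <= b -> b <= c ->
  mu.-integrable `]a, b] (EFin \o g) -> mu.-integrable `]b, c] (EFin \o g) ->
  mu.-integrable `]a, c] (EFin \o g) /\ intI a c g = intI a b g + intI b c g.
Proof.
move=> ab bc iA iB.
have eU : [set` `]a, c]] = [set` `]a, b]] `|` [set` `]b, c]].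
  by apply: itv_bndbnd_setU; rewrite bnd_simp.
have dj : [disjoint [set` `]a, b]] & [set` `]b, c]]].
  apply/disj_setPS => x [] /=; rewrite !in_itv /= => /andP[_ xb] /andP[bx _].
  by move: (lt_le_trans bx xb); rewrite ltxx.
have iU : mu.-integrable `]a, c] (EFin \o g).
  rewrite eU; apply/integrableP; split.
    apply/measurable_funU => //; split; exact: measurable_int iA || exact: measurable_int iB.
  rewrite ge0_integral_setU //.
  - move/integrableP: iA => [_ hA]; move/integrableP: iB => [_ hB].
    exact: lte_add_pinfty.
  - apply: measurableT_comp => //.
    apply/measurable_funU => //; split; exact: measurable_int iA || exact: measurable_int iB.
split => //.
by rewrite /intI eU Rintegral_setU // -eU.
Qed.

Lemma tele (n : nat) (t : nat -> R) (e : nat -> R) (g : R -> R) :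
  (forall j, (j < n)%N -> t j < t j.+1) ->
  (forall j, (j < n)%N -> mu.-integrable `]t j, t j.+1] (EFin \o g) /\
       (e j.+1) ^+ 2 - (e j) ^+ 2 <= 2 * intI (t j) (t j.+1) g) ->
  forall k, (k <= n)%N -> mu.-integrable `]t 0%N, t k] (EFin \o g) /\
       (e k) ^+ 2 - (e 0%N) ^+ 2 <= 2 * intI (t 0%N) (t k) g.
Proof.
move=> mono H.
have t0k : forall k, (k <= n)%N -> t 0%N <= t k.
  elim=> [|k IH] kn; first exact: lexx.
  apply: (le_trans (IH (ltnW kn))); apply: ltW; exact: mono.
elim=> [|k IH] kn.
  rewrite set_itv_ge; last by rewrite bnd_simp ltxx.
  split; first exact: integrable_set0.
  by rewrite /intI set_itv_ge ?bnd_simp ?ltxx // Rintegral_set0 subrr mulr0.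
have [i1 h1] := IH (ltnW kn).
have [i2 h2] := H k kn.
have [iU eI] := integrableU_itv (t0k k (ltnW kn)) (ltW (mono k kn)) i1 i2.
split => //; rewrite eI; lra.
Qed.

Lemma sumint (I : eqType) (s : seq I) (a b : R) (g : I -> R -> R) :
  (forall i, mu.-integrable `]a, b] (EFin \o g i)) ->
  mu.-integrable `]a, b] (EFin \o (fun t => \sum_(i <- s) g i t)) /\
  intI a b (fun t => \sum_(i <- s) g i t) = \sum_(i <- s) intI a b (g i).
Proof.
move=> ig; elim: s => [|i s [IHi IHe]].
  rewrite big_nil.
  have -> : (fun t => \sum_(i <- [::]) g i t) = (fun _ => 0).
    by apply/funext => t; rewrite big_nil.
  split; first exact: integrable0.
  by rewrite /intI Rintegral_cst // mul0r.
have -> : (fun t => \sum_(j <- i :: s) g j t) = (fun t => g i t + \sum_(j <- s) g j t).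
  by apply/funext => t; rewrite big_cons.
rewrite big_cons; split.
  exact: (integrableD _ (ig i) IHi).
by rewrite /intI RintegralD // -IHe.
Qed.

Lemma int_g (a b : R) (P Q : {poly R}) (eU eV FU FV : R -> R) :
  (forall t, a < t <= b -> eU t = P.[t]) ->
  (forall t, a < t <= b -> eV t = Q.[t]) ->
  mu.-integrable `]a, b] (EFin \o FU) -> mu.-integrable `]a, b] (EFin \o FV) ->
  mu.-integrable `]a, b] (EFin \o (fun t => (FU t - FV t) * (eU t - eV t))).
Proof.
move=> HP HQ iU iV.
have iB : mu.-integrable `]a, b] (EFin \o (fun t => FU t - FV t)).
  apply: (@eq_integrable _ _ _ mu `]a, b] (measurable_itv _) _ (EFin \o (fun t => FU t - FV t)) _ (@integrableB _ _ _ mu _ (measurable_itv _) _ _ iU iV)).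
  by move=> t _ /=; rewrite EFinB.
have := intMpoly (P - Q) iB.
apply: (@eq_integrable _ _ _ mu `]a, b] (measurable_itv _)).
move=> t /set_mem /=; rewrite in_itv /= => tab.
by rewrite HP // HQ // !hornerE.
Qed.
End S.
Unset Implicit Arguments. Set Strict Implicit.

Theorem theorem5p2 (R : realType) (N : nat) (T : R) (hT : 0 < T)
  (M : 'I_N -> nat) (tp : 'I_N -> nat -> R) (q : 'I_N -> nat -> nat)
  (f : ('I_N -> R) -> R -> ('I_N -> R))
  (U0 V0 : 'I_N -> R) (U V : 'I_N -> R -> R) (tbar : R) :
  valid_partitions T M tp ->
  monotone_rhs T f ->
  mdG_solution M tp q f U0 U ->
  mdG_solution M tp q f V0 V ->
  synchronized T M tp tbar ->
  vnorm (vsub (fun i => U i tbar) (fun i => V i tbar)) <= vnorm (vsub U0 V0).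
Proof.
move=> vp mon sU sV [/andP[tb0 tbT] sy].
pose g i := fun t => (f (fun k => U k t) t i - f (fun k => V k t) t i) * (U i t - V i t).
have key : forall i, (@lebesgue_measure R).-integrable `]0, tbar] (EFin \o g i) /\
   (U i tbar - V i tbar) ^+ 2 - (U0 i - V0 i) ^+ 2 <= 2 * intI 0 tbar (g i).
  move=> i.
  have [ti0 [tiM mono]] := vp i.
  have [j [jM tj]] := sy i.
  have j0 : j != 0%N.
    apply/eqP => j0; move: tj; rewrite j0 ti0 => t0.
    by move: tb0; rewrite -t0 ltxx.
  pose e := fun k => if k == 0%N then U0 i - V0 i else U i (tp i k) - V i (tp i k).
  have hyp : forall k, (k < M i)%N ->
     (@lebesgue_measure R).-integrable `]tp i k, tp i k.+1] (EFin \o g i) /\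
     (e k.+1) ^+ 2 - (e k) ^+ 2 <= 2 * intI (tp i k) (tp i k.+1) (g i).
    move=> k kM.
    have kM' : (0 < k.+1 <= M i)%N by rewrite ltn0Sn kM.
    have [P [sP [HP [iP GP]]]] := sU i k.+1 kM'.
    have [Q [sQ [HQ [iQ GQ]]]] := sV i k.+1 kM'.
    rewrite /= in HP iP GP HQ iQ GQ.
    split.
      exact: (int_g HP HQ iP iQ).
    have := step (mono k kM) sP sQ HP HQ iP iQ GP GQ.
    rewrite /e /=.
    by case: (k == 0%N).
  have [H1 H2] := @tele R (M i) (tp i) e (g i) mono hyp j jM.
  rewrite ti0 tj in H1 H2.
  move: H2; rewrite /e (negbTE j0) eqxx => H2.
  by rewrite tj in H2; split.
rewrite /vnorm ler_sqrt; last first.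
  by apply: sumr_ge0 => i _; rewrite -expr2 sqr_ge0.
have [iS eS] := @sumint R _ (index_enum 'I_N) 0 tbar g (fun i => (key i).1).
have neg : intI 0 tbar (fun t => \sum_(i <- index_enum 'I_N) g i t) <= 0.
  rewrite /intI.
  apply: (@le_trans _ _ (Rintegral (@lebesgue_measure R) `]0, tbar] (fun _ => 0 : R))); last first.
    by rewrite Rintegral_cst // mul0r.
  apply: (@le_Rintegral _ _ _ (@lebesgue_measure R)) => //.
    exact: integrable0.
  move=> t /=; rewrite in_itv /= => /andP[t0 ttb].
  have := mon (fun k => U k t) (fun k => V k t) t.
  rewrite t0 (le_trans ttb tbT) => /(_ isT).
  by rewrite /vdot /vsub.
have hsum : \sum_(i < N) ((U i tbar - V i tbar) ^+ 2 - (U0 i - V0 i) ^+ 2)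
   <= \sum_(i < N) 2 * intI 0 tbar (g i).
  by apply: ler_sum => i _; exact: (key i).2.
rewrite -mulr_sumr sumrB in hsum.
have e2 : \sum_(i < N) intI 0 tbar (g i) <= 0 by rewrite -eS.
rewrite /vsub /vdot.
under eq_bigr do rewrite -expr2.
under [X in _ <= X]eq_bigr do rewrite -expr2.
lra.
Qed.
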